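(* For any $n$-node graph $G$ and any $r\in\mathbb{N}$, the number of $r$-cycles in $G$ can be counted within $(r-1)\cdot\mathcal{O}(\log n)$ rounds of the $\mathsf{HYBRID}$ model.
   Context: Distributed setting: $n$ nodes with unique IDs in $\{1,\dots,n\}$; local communication graph $G$ undirected; each node initially knows only its neighbors' IDs; synchronous rounds, unlimited local computation. In the $\mathsf{HYBRID}$ model, in every round each node may send a message of arbitrary size to each neighbor (local mode) and may additionally send and receive $\mathcal{O}(\log n)$-bit messages to/from up to $\mathcal{O}(\log n)$ arbitrary nodes (global mode); excess messages are dropped arbitrarily. An $r$-cycle is a cycle of length $r$; counting means every node learns the total number of $r$-cycles in $G$. *)

(* Defs.v *)
From mathcomp Require Import all_boot.
Set Implicit Arguments. Unset Strict Implicit. Unset Printing Implicit Defensive.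

(* c * (log2 n + 1): the O(log n) quantity, for an explicit constant c. *)
Definition logO (c n : nat) : nat := c * (trunc_log 2 n).+1.

(* A global-mode message: (partner id, payload of [bits] bits). *)
Definition gmsg (n bits : nat) := ('I_n * 'I_(2 ^ bits))%type.

(* A deterministic HYBRID algorithm for n nodes (ids = 'I_n), with at most
   [cap] global messages sent per node per round, each of [bits] bits.
   Local state and local messages are of arbitrary type (unlimited local
   computation, arbitrary-size local messages). *)
Record hybrid_alg (n cap bits : nat) := HybridAlg {
  hSt : Type;
  hLMsg : Type;
  (* initial state from own id and the (sorted) list of neighbour ids *)
  h_init : 'I_n -> seq 'I_n -> hSt;
  h_lsend : hSt -> 'I_n -> hLMsg;
  (* global messages: (destination id, payload) *)
  h_gsend : hSt -> seq (gmsg n bits);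
  h_gsend_cap : forall s, size (h_gsend s) <= cap;
  (* transition: local messages received (sender id, msg) and global
     messages received (sender id, payload) *)
  h_step : hSt -> seq ('I_n * hLMsg) -> seq (gmsg n bits) -> hSt;
  h_out : hSt -> nat }.

(* Adversarial dropping of excess global messages: a node receiving more than
   [cap] global messages gets an arbitrary [cap] of them. *)
Definition valid_drop (n cap bits : nat)
    (adv : nat -> 'I_n -> seq (gmsg n bits) -> seq (gmsg n bits)) : Prop :=
  forall t v s, subseq (adv t v s) s /\ size (adv t v s) = minn cap (size s).

Definition nbrs n (e : rel 'I_n) (v : 'I_n) : seq 'I_n :=
  [seq u <- enum 'I_n | e v u].

Definition global_in n cap bits (A : hybrid_alg n cap bits)
    (cf : 'I_n -> hSt A) (v : 'I_n) : seq (gmsg n bits) :=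
  flatten [seq [seq (u, p.2) | p <- [seq p <- h_gsend (cf u) | p.1 == v]]
          | u <- enum 'I_n].

Fixpoint hconfig n cap bits (A : hybrid_alg n cap bits) (e : rel 'I_n)
    (adv : nat -> 'I_n -> seq (gmsg n bits) -> seq (gmsg n bits)) (t : nat)
    : 'I_n -> hSt A :=
  match t with
  | 0 => fun v => h_init A v (nbrs e v)
  | t'.+1 =>
      let cf := hconfig A e adv t' in
      fun v => h_step (cf v) [seq (u, h_lsend (cf u) v) | u <- nbrs e v]
                      (adv t' v (global_in cf v))
  end.

Definition is_rcycle n (e : rel 'I_n) (r : nat) (F : {set {set 'I_n}}) : bool :=
  (2 < r) &&
  [exists t : {ffun 'I_r -> 'I_n},
     [&& injectiveb t, [forall i, e (t i) (t (ordS i))]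
       & F == [set [set t i; t (ordS i)] | i : 'I_r]]].

Definition num_rcycles n (e : rel 'I_n) (r : nat) : nat :=
  #|[set F : {set {set 'I_n}} | is_rcycle e r F]|.

(* Main.v *)
Require Import Defs.
From mathcomp Require Import all_boot zify.
From Stdlib Require Import FunctionalExtensionality.
Set Implicit Arguments. Unset Strict Implicit. Unset Printing Implicit Defensive.

Lemma ord_pos n (v : 'I_n) : 0 < n.
Proof. exact: leq_ltn_trans (leq0n v) (ltn_ord v). Qed.

Definition shiftI n (v : 'I_n) (d : nat) : 'I_n :=
  Ordinal (ltn_pmod (v + d) (ord_pos v)).

Lemma shiftI_val n (v : 'I_n) d : val (shiftI v d) = (v + d) %% n.
Proof. by []. Qed.

Lemma shiftI_shiftI n (v : 'I_n) a b : shiftI (shiftI v a) b = shiftI v (a + b).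
Proof. by apply: val_inj; rewrite /= modnDml addnA. Qed.

Lemma shiftI_mod n (v : 'I_n) a : shiftI v (a %% n) = shiftI v a.
Proof. by apply: val_inj; rewrite /= modnDmr. Qed.

Lemma shiftI_inj n d : injective (fun v : 'I_n => shiftI v d).
Proof.
move=> u w /(congr1 val) /= /eqP; rewrite eqn_modDr => /eqP.
by rewrite !modn_small // => /val_inj.
Qed.

Lemma shiftI_back n (v : 'I_n) a : shiftI (shiftI v a) (n - a %% n) = v.
Proof.
have n0 := ord_pos v.
apply: val_inj; rewrite /= modnDml -addnA -modnDmr -(modnDml a) subnKC; last first.
  by apply: ltnW; apply: ltn_pmod.
by rewrite modnn addn0 modn_small.
Qed.

Lemma shiftI0 n (v : 'I_n) : shiftI v 0 = v.
Proof. by apply: val_inj; rewrite /= addn0 modn_small. Qed.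

Fixpoint Wf n (M : nat) (x : 'I_n -> nat) k v : nat :=
  match k with 0 => x v %% M
  | k'.+1 => (Wf M x k' v + Wf M x k' (shiftI v (2 ^ k'))) %% M end.
Fixpoint Af n (M : nat) (x : 'I_n -> nat) k v : nat :=
  match k with 0 => 0
  | k'.+1 => if odd (n %/ 2 ^ k') then (Wf M x k' v + Af M x k' (shiftI v (2 ^ k'))) %% M
             else Af M x k' v end.

Lemma Wf_sum n M x k (v : 'I_n) :
  Wf M x k v = (\sum_(0 <= j < 2 ^ k) x (shiftI v j)) %% M.
Proof.
elim: k v => [|k IH] v /=; first by rewrite big_nat1 shiftI0.
rewrite !IH modnDm expnS mul2n -addnn [in RHS](@big_cat_nat _ _ _ (2 ^ k)) ?leq_addr //.
congr (_ %% _); congr (_ + _).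
transitivity (\sum_(0 + 2^k <= i < 2^k + 2^k) x (shiftI v i)); last by [].
rewrite big_addn addnK; apply: eq_bigr => j _.
by rewrite shiftI_shiftI addnC.
Qed.

Lemma mod_pow2S n k : n %% 2 ^ k.+1 = odd (n %/ 2 ^ k) * 2 ^ k + n %% 2 ^ k.
Proof.
have p0 : 0 < 2 ^ k by rewrite expn_gt0.
set q := n %/ 2 ^ k.
have Hn : n = (q %/ 2) * 2 ^ k.+1 + (odd q * 2 ^ k + n %% 2 ^ k).
  rewrite {1}(divn_eq n (2 ^ k)) -/q {1}(divn_eq q 2) modn2 expnS.
  by rewrite mulnDl addnA; congr (_ + _ + _); rewrite mulnA.
rewrite {1}Hn modnMDl modn_small // expnS mul2n -addnn.
have := ltn_pmod n p0; case: (odd q); rewrite ?mul1n ?mul0n ?add0n => h.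
  by rewrite ltn_add2l.
by apply: leq_trans h (leq_addr _ _).
Qed.

Lemma Af_sum n M x k (v : 'I_n) :
  Af M x k v = (\sum_(0 <= j < n %% 2 ^ k) x (shiftI v j)) %% M.
Proof.
elim: k v => [|k IH] v /=; first by rewrite expn0 modn1 big_geq // mod0n.
rewrite mod_pow2S; case: (odd (n %/ 2 ^ k)); rewrite ?mul1n ?mul0n ?add0n; last exact: IH.
rewrite IH Wf_sum modnDm [in RHS](@big_cat_nat _ _ _ (2 ^ k)) ?leq_addr //.
congr (_ %% _); congr (_ + _).
transitivity (\sum_(0 + 2^k <= i < 2^k + n %% 2 ^ k) x (shiftI v i)); last by [].
rewrite big_addn addKn; apply: eq_bigr => j _.
by rewrite shiftI_shiftI addnC.
Qed.

Lemma sum_shift n (x : 'I_n -> nat) (v : 'I_n) :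
  \sum_(0 <= j < n) x (shiftI v j) = \sum_u x u.
Proof.
have hi : injective (fun j : 'I_n => shiftI v j).
  move=> a b /(congr1 val) /= /eqP; rewrite eqn_modDl => /eqP.
  by rewrite !modn_small // => /val_inj.
by rewrite big_mkord [RHS](reindex_inj hi).
Qed.
Fixpoint reach n (e : rel 'I_n) t (v u : 'I_n) : bool :=
  match t with 0 => v == u
  | t'.+1 => reach e t' v u || has (fun w => reach e t' w u) (nbrs e v) end.

Definition owner n (v : 'I_n) (F : {set {set 'I_n}}) : bool :=
  (v \in cover F) && [forall u in cover F, v <= u].
Definition Krel n (kn : 'I_n -> option (seq 'I_n)) : rel 'I_n :=
  fun a b => if kn a is Some s then b \in s else false.
Definition cnt n r (v : 'I_n) (kn : 'I_n -> option (seq 'I_n)) : nat :=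
  #|[set F | is_rcycle (Krel kn) r F && owner v F]|.
Definition ikn n (e : rel 'I_n) t (v : 'I_n) : 'I_n -> option (seq 'I_n) :=
  fun u => if reach e t v u then Some (nbrs e u) else None.

Lemma mem_nbrs n (e : rel 'I_n) a b : (b \in nbrs e a) = e a b.
Proof. by rewrite mem_filter mem_enum andbT. Qed.

Lemma reach_mono n (e : rel 'I_n) k m v u : k <= m -> reach e k v u -> reach e m v u.
Proof.
move=> /subnK <-; elim: (m - k) => [|d IH] // H.
by rewrite addSn /= IH.
Qed.

Lemma iter_ordS_val r (j : 'I_r) k : val (iter k (@ordS r) j) = (j + k) %% r.
Proof.
elim: k => [|k IH] /=; first by rewrite addn0 modn_small.
by rewrite IH -addn1 modnDml -addnA addn1.
Qed.

Lemma reach_path n r (e : rel 'I_n) (t : 'I_r -> 'I_n) :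
  (forall i, e (t i) (t (ordS i))) ->
  forall k j, reach e k (t j) (t (iter k (@ordS r) j)).
Proof.
move=> He; elim=> [|k IH] j /=; first by rewrite eqxx.
apply/orP; right; apply/hasP; exists (t (ordS j)); first by rewrite mem_nbrs.
by rewrite -iterS iterSr IH.
Qed.

Lemma reach_cycle n r (e : rel 'I_n) (t : 'I_r -> 'I_n) :
  (forall i, e (t i) (t (ordS i))) ->
  forall i j, reach e (r - 1) (t j) (t i).
Proof.
move=> He i j.
have r0 : 0 < r by apply: leq_ltn_trans (leq0n i) (ltn_ord i).
set k := (i + (r - j)) %% r.
have -> : i = iter k (@ordS r) j.
  apply: val_inj; rewrite iter_ordS_val /k modnDmr addnA addnC addnA subnK; last exact: ltnW.
  by rewrite addnC modnDr modn_small.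
apply: reach_mono (reach_path He k j).
by rewrite /k subn1 -ltnS prednK //; apply: ltn_pmod.
Qed.

Lemma cover_cycle n r (t : 'I_r -> 'I_n) v :
  v \in cover [set [set t i; t (ordS i)] | i : 'I_r] -> exists j, v = t j.
Proof.
case/bigcupP=> B /imsetP[i _ ->] /set2P[->|->]; by eexists.
Qed.

Lemma cnt_eq n r (e : rel 'I_n) (v : 'I_n) :
  cnt r v (ikn e (r - 1) v) = #|[set F | is_rcycle e r F && owner v F]|.
Proof.
apply: eq_card => F; rewrite !inE.
case Ho: (owner v F); rewrite ?andbF ?andbT //.
rewrite /is_rcycle; case: (2 < r) => //=.
apply/existsP/existsP => -[t /and3P[Hi He /eqP HF]]; exists t; apply/and3P; split => //; try by apply/eqP.
  apply/forallP => i; move/forallP: He => /(_ i).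
  by rewrite /Krel /ikn; case: reach => //; rewrite mem_nbrs.
move/andP: Ho => [Hv _]; rewrite HF in Hv; case: (cover_cycle Hv) => j Hj; rewrite Hj.
have He' : forall i, e (t i) (t (ordS i)) by move=> i; move/forallP: He => /(_ i).
apply/forallP => i; rewrite /Krel /ikn (reach_cycle He' i j) mem_nbrs; exact: He'.
Qed.

Lemma card_sum (T : finType) (Q : pred T) : #|[set x | Q x]| = \sum_x (Q x : nat).
Proof. by rewrite -sum1_card big_mkcond /=; apply: eq_bigr => x _; rewrite inE; case: (Q x). Qed.

Lemma owner_unique n r (e : rel 'I_n) F :
  is_rcycle e r F -> \sum_v (owner v F : nat) = 1.
Proof.
case/andP=> r2 /existsP[t /and3P[_ _ /eqP HF]].
have r0 : 0 < r by apply: leq_ltn_trans r2.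
set i0 : 'I_r := Ordinal r0.
have Pv0 : t i0 \in cover F.
  by rewrite HF; apply/bigcupP; exists [set t i0; t (ordS i0)]; [apply: imset_f | rewrite set21].
case: (arg_minnP (fun u : 'I_n => val u) Pv0) => m Pm Hm.
have Hown : forall v, owner v F = (v == m).
  move=> v; apply/idP/eqP => [/andP[Pv /forallP Hv]|->].
    apply: val_inj; apply/eqP; rewrite eqn_leq Hm // andbT.
    by have := Hv m; move/implyP; apply.
  by apply/andP; split; [exact: Pm | apply/forallP => u; apply/implyP => Pu; apply: Hm].
rewrite (bigD1 m) //= Hown eqxx big1 // => u /negbTE Hu; by rewrite Hown Hu.
Qed.

Lemma partition_cnt n r (e : rel 'I_n) :
  num_rcycles e r = \sum_v #|[set F | is_rcycle e r F && owner v F]|.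
Proof.
rewrite /num_rcycles card_sum.
under [RHS]eq_bigr => v _ do rewrite card_sum.
rewrite exchange_big /=; apply: eq_bigr => F _.
case Hc: (is_rcycle e r F) => /=; last by rewrite big1.
by rewrite (owner_unique Hc).
Qed.

Lemma num_bound n r (e : rel 'I_n) : num_rcycles e r <= n ^ r.
Proof.
rewrite /num_rcycles.
apply: (@leq_trans #|(fun t : {ffun 'I_r -> 'I_n} => [set [set t i; t (ordS i)] | i : 'I_r]) @: setT|).
  apply: subset_leq_card; apply/subsetP => F; rewrite inE => /andP[_ /existsP[t /and3P[_ _ /eqP ->]]].
  by apply/imsetP; exists t.
by apply: leq_trans (leq_imset_card _ _) _; rewrite cardsT card_ffun !card_ord.
Qed.

Definition LL n := (trunc_log 2 n).+1.
Definition BB n := 2 ^ logO 4 n.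
Definition MM n r := 2 ^ (r * LL n).
Definition RR (r : nat) := r - 1.

Lemma BB_pos n : 0 < BB n. Proof. by rewrite expn_gt0. Qed.
Lemma MM_pos n r : 0 < MM n r. Proof. by rewrite expn_gt0. Qed.

Record st n := St { sid : 'I_n; stm : nat; skn : 'I_n -> option (seq 'I_n);
  sk : nat; si : nat; sW : nat; sA : nat; sacc : nat }.

Definition kmerge n (kn : 'I_n -> option (seq 'I_n))
  (ls : seq ('I_n * ('I_n -> option (seq 'I_n)))) : 'I_n -> option (seq 'I_n) :=
  fun u => if kn u is Some s then Some s
           else foldr (fun p acc => if p.2 u is Some s then Some s else acc) None ls.

Definition code n r (s : st n) := sW s * MM n r + sA s.
Definition digit n r (s : st n) : 'I_(2 ^ logO 4 n) :=
  Ordinal (ltn_pmod (code r s %/ BB n ^ (RR r - 1 - si s)) (BB_pos n)).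
Definition active n r (s : st n) := (r <= stm s) && (sk s < LL n).
Definition target n (s : st n) : 'I_n := shiftI (sid s) (n - 2 ^ sk s %% n).
Definition gsend n r (s : st n) : seq (gmsg n (logO 4 n)) :=
  if active r s then [:: (target s, digit r s)] else [::].

Lemma gsend_cap n r s : size (@gsend n r s) <= logO 4 n.
Proof. by rewrite /gsend; case: active => //=; rewrite /logO mulSn. Qed.

Definition st_init n (v : 'I_n) (nb : seq 'I_n) : st n :=
  St v 0 (fun u => if u == v then Some nb else None) 0 0 0 0 0.

Definition st_step n r (s : st n) (ls : seq ('I_n * ('I_n -> option (seq 'I_n))))
    (gs : seq (gmsg n (logO 4 n))) : st n :=
  let t := stm s in
  let kn' := if t < r - 1 then kmerge (skn s) ls else skn s in
  if t == r - 1 then St (sid s) t.+1 kn' 0 0 (cnt r (sid s) (skn s) %% MM n r) 0 0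
  else if r <= t then
    let fin := (si s).+1 == RR r in
    let k' := if fin then (sk s).+1 else sk s in
    let i' := if fin then 0 else (si s).+1 in
    if sk s < LL n then
      let d := if gs is (_, d) :: _ then val d else 0 in
      let acc1 := sacc s * BB n + d in
      if fin then
        St (sid s) t.+1 kn' k' i' ((sW s + acc1 %/ MM n r) %% MM n r)
           (if odd (n %/ 2 ^ sk s) then (sW s + acc1 %% MM n r) %% MM n r else sA s) 0
      else St (sid s) t.+1 kn' k' i' (sW s) (sA s) acc1
    else St (sid s) t.+1 kn' k' i' (sW s) (sA s) (sacc s)
  else St (sid s) t.+1 kn' (sk s) (si s) (sW s) (sA s) (sacc s).

Definition st_out n r (s : st n) : nat := if r <= 2 then 0 else sA s.

Definition ALG n r : hybrid_alg n (logO 4 n) (logO 4 n) :=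
  @HybridAlg n (logO 4 n) (logO 4 n) (st n) ('I_n -> option (seq 'I_n))
    (@st_init n) (fun s _ => skn s) (@gsend n r) (@gsend_cap n r) (@st_step n r) (@st_out n r).
Definition xx n (e : rel 'I_n) r (v : 'I_n) := cnt r v (ikn e (r - 1) v).
Definition PP n (e : rel 'I_n) r k (u : 'I_n) :=
  Wf (MM n r) (xx e r) k u * MM n r + Af (MM n r) (xx e r) k u.

Definition Inv n r (e : rel 'I_n) t v (s : st n) :=
 [/\ sid s = v, stm s = t, skn s = ikn e (minn t (r-1)) v &
   r <= t -> [/\ sk s * RR r + si s = t - r, si s < RR r,
     sW s = Wf (MM n r) (xx e r) (minn (sk s) (LL n)) v,
     sA s = Af (MM n r) (xx e r) (minn (sk s) (LL n)) v &
     sk s < LL n -> sacc s = PP e r (sk s) (shiftI v (2 ^ sk s)) %/ BB n ^ (RR r - si s)]].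

Lemma flatten_if (T U : eqType) (q : pred T) (f : T -> U) s :
  flatten [seq (if q u then [:: f u] else [::]) | u <- s] = map f (filter q s).
Proof. by elim: s => //= a s ->; case: (q a). Qed.

Lemma global_in_one n cap bits (A : hybrid_alg n cap bits) cf (v u0 : 'I_n)
   (tg : 'I_n -> 'I_n) dg :
 (forall u, h_gsend (cf u) = [:: (tg u, dg u)]) ->
 (forall u, (tg u == v) = (u == u0)) -> global_in (A:=A) cf v = [:: (u0, dg u0)].
Proof.
move=> Hs Ht; rewrite /global_in.
have -> : [seq [seq (u, p.2) | p <- [seq p <- h_gsend (cf u) | p.1 == v]] | u <- enum 'I_n]
   = [seq (if pred1 u0 u then [:: (u, dg u)] else [::]) | u <- enum 'I_n].
  by apply: eq_map => u; rewrite Hs /= Ht; case: (u == u0).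
by rewrite flatten_if filter_pred1_uniq ?enum_uniq ?mem_enum.
Qed.

Lemma Wf_lt n M (x : 'I_n -> nat) k v : 0 < M -> Wf M x k v < M.
Proof. by case: k => [|k] /= M0; apply: ltn_pmod. Qed.

Lemma Af_lt n M (x : 'I_n -> nat) k v : 0 < M -> Af M x k v < M.
Proof.
move=> M0; elim: k v => [|k IH] v //=; case: odd => //; exact: ltn_pmod.
Qed.

Lemma PP_lt n (e : rel 'I_n) r k u : 2 <= r -> PP e r k u < BB n ^ RR r.
Proof.
move=> r2; rewrite /PP.
have M0 := MM_pos n r.
have hW := Wf_lt (xx e r) k u M0; have hA := Af_lt (xx e r) k u M0.
apply: (@leq_trans (MM n r * MM n r)).
  apply: (@leq_trans ((MM n r).-1 * MM n r + MM n r)).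
    rewrite -addnS; apply: leq_add; last by [].
    by apply: leq_mul => //; rewrite -ltnS prednK.
  by rewrite addnC -mulSn prednK.
rewrite /MM /BB -expnD -expnM; apply: leq_pexp2l => //.
rewrite /logO /RR /LL; move: (trunc_log 2 n) => L; clear -r2; nia.
Qed.

Lemma digit_step P B j : 0 < B -> P %/ B ^ j.+1 * B + (P %/ B ^ j) %% B = P %/ B ^ j.
Proof. by move=> B0; rewrite expnSr divnMA -divn_eq. Qed.

Lemma foldr_ikn n (e : rel 'I_n) m u s :
  foldr (fun p acc => if p.2 u is Some s then Some s else acc) None
    [seq (w, ikn e m w) | w <- s] = if has (fun w => reach e m w u) s then Some (nbrs e u) else None.
Proof. by elim: s => //= w s ->; rewrite /ikn; case: reach. Qed.

Lemma merge_ikn n (e : rel 'I_n) m v :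
  kmerge (ikn e m v) [seq (w, ikn e m w) | w <- nbrs e v] = ikn e m.+1 v.
Proof.
apply: functional_extensionality => u.
rewrite /kmerge foldr_ikn /ikn /=; by case: reach.
Qed.

Lemma uniq_ctr a b c d R : a * R + b = c * R + d -> b < R -> d < R -> a = c /\ b = d.
Proof.
move=> H hb hd; have R0 : 0 < R by apply: leq_ltn_trans hb.
split.
  by have := congr1 (divn^~ R) H; rewrite !divnMDl // !divn_small // !addn0.
by have := congr1 (modn^~ R) H; rewrite !modnMDl !modn_small.
Qed.

Lemma inv_all n r (e : rel 'I_n) adv : 2 < r -> valid_drop (logO 4 n) adv ->
  forall t v, Inv r e t v (hconfig (ALG n r) e adv t v).
Proof.
move=> r3 Hadv; elim=> [|t IH] v.
  split => //=; last by move=> H; have := leq_trans r3 H.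
  apply: functional_extensionality => u; rewrite /ikn min0n /= eq_sym.
  by case: eqP => // ->.
set cf := hconfig (ALG n r) e adv t.
change (Inv r e t.+1 v (st_step r (cf v) [seq (u, skn (cf u)) | u <- nbrs e v]
   (adv t v (global_in (A:=ALG n r) cf v)))).
case: (IH v) => Hid Htm Hkn Hph.
have -> : [seq (u, skn (cf u)) | u <- nbrs e v] = [seq (u, ikn e (minn t (r-1)) u) | u <- nbrs e v].
  by apply: eq_map => u; case: (IH u) => _ _ -> _.
set gs := adv t v _.
rewrite /st_step Htm Hid Hkn.
have -> : (if t < r - 1 then kmerge (ikn e (minn t (r - 1)) v)
             [seq (u, ikn e (minn t (r - 1)) u) | u <- nbrs e v]
          else ikn e (minn t (r - 1)) v) = ikn e (minn t.+1 (r - 1)) v.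
  case: (ltnP t (r - 1)) => h /=; rewrite ?merge_ikn; congr ikn; lia.
fold cf in Hph.
have r2 : 1 < r by apply: ltnW.
case: eqP => Ht1.
  split => //= _; split.
  - by rewrite /RR; lia.
  - by rewrite /RR; lia.
  - by rewrite /xx; congr (cnt _ _ (ikn _ _ _) %% _); lia.
  - by [].
  - by move=> _; rewrite subn0 divn_small // PP_lt.
case: (leqP r t) => Hrt; last first.
  by split => //= H; exfalso; lia.
have [Hc Hi HW HA Hacc] := Hph Hrt.
move: Hc Hi HW HA Hacc; set k := sk (cf v); set i := si (cf v) => Hc Hi HW HA Hacc.
case: (ltnP k (LL n)) => Hk; last first.
  have Em : forall k', k <= k' -> minn k' (LL n) = LL n by move=> k' h; lia.
  case: (boolP (i.+1 == RR r)) => Hfin; split => //= _; split; rewrite ?Em ?HW ?HA ?Em //;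
    try (by move=> h; exfalso; lia); rewrite /RR in Hfin Hc Hi *; 
    try (by move/eqP: Hfin => Hfin; rewrite mulSn; lia); lia.
have Emk : minn k (LL n) = k by lia.
have Hu : forall u, [/\ sk (cf u) = k, si (cf u) = i, sid (cf u) = u, stm (cf u) = t &
                        code r (cf u) = PP e r k u].
  move=> u; case: (IH u) => Hidu Htmu _ Hphu; have [Hcu Hiu HWu HAu _] := Hphu Hrt.
  fold cf in Hidu; fold cf in Htmu; fold cf in Hcu; fold cf in Hiu; fold cf in HWu; fold cf in HAu.
  have [E1 E2] := uniq_ctr (etrans Hcu (esym Hc)) Hiu Hi.
  by split => //; rewrite /code HWu HAu E1 Emk.
set u0 := shiftI v (2 ^ k).
have Hgs : gs = [:: (u0, digit r (cf u0))].
  rewrite /gs (@global_in_one _ _ _ (ALG n r) cf v u0 (fun u => shiftI u (n - 2 ^ k %% n))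
                 (fun u => digit r (cf u))).
  - have [Hsub Hsz] := Hadv t v [:: (u0, digit r (cf u0))].
    apply/eqP; rewrite -(size_subseq_leqif Hsub).2 Hsz /= /logO; apply/eqP; lia.
  - move=> u; have [E1 E2 E3 E4 _] := Hu u.
    by rewrite /= /gsend /active /target E1 E3 E4 Hrt Hk.
  - move=> u; apply/eqP/eqP => [H|->]; last by rewrite shiftI_back.
    apply: (@shiftI_inj _ (n - 2 ^ k %% n)); by rewrite /= H shiftI_back.
rewrite Hgs /=.
have [_ E2 _ _ E5] := Hu u0.
rewrite /digit /= E2 E5 Hacc //.
have -> : RR r - i = (RR r - 1 - i).+1 by lia.
rewrite digit_step ?BB_pos //.
case: (boolP (i.+1 == RR r)) => Hfin.
  have -> : RR r - 1 - i = 0 by move/eqP: Hfin; lia.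
  rewrite expn0 divn1.
  have HPd : PP e r k u0 %/ MM n r = Wf (MM n r) (xx e r) k u0.
    by rewrite /PP divnMDl ?MM_pos // divn_small ?Af_lt ?MM_pos // addn0.
  have HPm : PP e r k u0 %% MM n r = Af (MM n r) (xx e r) k u0.
    by rewrite /PP modnMDl modn_small ?Af_lt ?MM_pos.
  have Emk1 : minn k.+1 (LL n) = k.+1 by lia.
  split => //= _; split.
  - by move/eqP: Hfin => Hfin; rewrite mulSn; rewrite /RR in Hfin Hc *; lia.
  - by rewrite /RR; lia.
  - by rewrite Emk1 /= HW Emk HPd.
  - by rewrite Emk1 /= HW HA Emk HPm.
  - by move=> _; rewrite subn0 divn_small // PP_lt.
split => //= _; split.
- by rewrite /RR in Hfin Hc *; lia.
- by rewrite /RR in Hfin Hi *; lia.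
- by rewrite HW.
- by rewrite HA.
- by move=> _; congr (_ %/ _ ^ _); lia.
Qed.

Lemma pow_bound n r : 0 < r -> n ^ r < MM n r.
Proof.
move=> r0; rewrite /MM mulnC expnM ltn_exp2r //; exact: trunc_log_ltn.
Qed.

Theorem proposition36 :
  exists c : nat, 0 < c /\
  forall r n : nat,
  exists A : hybrid_alg n (logO c n) (logO c n),
  forall e : rel 'I_n, symmetric e -> irreflexive e ->
  forall adv, valid_drop (logO c n) adv ->
  forall v : 'I_n,
    h_out (hconfig A e adv ((r - 1) * logO c n) v) = num_rcycles e r.
Proof.
exists 4; split => // r n; exists (ALG n r) => e _ _ adv Hadv v.
rewrite /= /st_out; case: leqP => r2.
  apply/esym/eqP; rewrite /num_rcycles cards_eq0; apply/eqP/setP => F.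
  by rewrite !inE /is_rcycle ltnNge r2.
set T := (r - 1) * logO 4 n.
have HrT : r <= T by rewrite /T /logO; nia.
case: (@inv_all n r e adv r2 Hadv T v) => _ _ _ /(_ HrT) [Hc Hi _ HA _].
have Hk : LL n <= sk (hconfig (ALG n r) e adv T v).
  move: Hc Hi; rewrite /T /logO /RR /LL; move: (sk _) (si _) => k i; nia.
have Hn : n %% 2 ^ LL n = n by rewrite modn_small // trunc_log_ltn.
rewrite HA (minn_idPr Hk) Af_sum Hn sum_shift.
under eq_bigr => u _ do rewrite /xx cnt_eq.
rewrite -partition_cnt modn_small //.
have r0 : 0 < r by apply: leq_trans r2.
have h1 := @num_bound n r e. have h2 := pow_bound n r0. exact: (leq_ltn_trans h1 h2).
Qed.
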